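(* Let $\varepsilon>0$, $u_0\in\mathcal V_{[0,1]}\setminus\{\mathbf 0,\mathbf 1\}$, and let $\tau_n\downarrow0$ with $\tau_n<\varepsilon$ be such that for every $t\ge0$ the limit $\hat u(t):=\lim_{n\to\infty}u^{[\tau_n]}_{\lceil t/\tau_n\rceil}$ exists and $\hat u$ is (together with some $\gamma$) a solution of mass-conserving double-obstacle AC flow on $[0,\infty)$ with $\hat u(0)=u_0$. Then $\hat u\in C^{0,1}([0,\infty);\mathcal V)$, i.e. $\hat u$ is Lipschitz continuous on $[0,\infty)$.
   Context: $G=(V,E)$ is a finite, simple, connected, undirected graph with weights $\omega_{ij}=\omega_{ji}>0$ for $ij\in E$, $\omega_{ij}=0$ otherwise; $d_i=\sum_j\omega_{ij}$, $r\in[0,1]$ fixed. $\mathcal V$ = functions $V\to\mathbb R$ with $\langle u,v\rangle_{\mathcal V}=\sum_i u_iv_id_i^r$ and norm $\|\cdot\|_{\mathcal V}$; $\mathcal V_{[0,1]}$ = functions $V\to[0,1]$. $(\Delta u)_i=d_i^{-r}\sum_j\omega_{ij}(u_i-u_j)$, $e^{-\tau\Delta}$ its matrix exponential. $\mathbf 1$ all-ones, $\mathbf 0$ zero function; $\mathcal M(u)=\langle u,\mathbf 1\rangle_{\mathcal V}$; $\bar v=\mathcal M(v)/\mathcal M(\mathbf 1)$. For $u\in\mathcal V_{[0,1]}$, $\mathcal B(u)$ = set of $\beta\in\mathcal V$ with $\beta_i\ge0$ if $u_i=0$, $\beta_i=0$ if $0<u_i<1$, $\beta_i\le0$ if $u_i=1$.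 Semi-discrete iterates with time step $\tau$, $\lambda=\tau/\varepsilon$ and initial state $u_0$: $u^{[\tau]}_0=u_0$ and for $m\ge0$, some $\beta^{[\tau]}_{m+1}\in\mathcal B(u^{[\tau]}_{m+1})$ with $u^{[\tau]}_{m+1} -e^{-\tau\Delta}u^{[\tau]}_m-\lambda u^{[\tau]}_{m+1}+\lambda\overline{u^{[\tau]}_{m+1}}\mathbf{1} =\lambda\beta^{[\tau]}_{m+1} -\lambda\overline{\beta^{[\tau]}_{m+1}}\mathbf{1}$. A pair $(u,\beta)$ is a solution to mass-conserving double-obstacle AC flow on $[0,\infty)$ if $u\in H^1_{loc}\cap C^0$, $u(t)\in\mathcal V_{[0,1]}$, and for a.e. $t$: $\varepsilon \frac{du}{dt} + \varepsilon\Delta u-u+\bar u\mathbf{1} = \beta - \bar\beta\mathbf{1}$, $\beta(t)\in\mathcal B(u(t))$. *)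

(* Defs.v *)
From HB Require Import structures.
From mathcomp Require Import all_boot all_order all_algebra.
From mathcomp Require Import all_classical all_reals all_analysis.
Set Implicit Arguments. Unset Strict Implicit. Unset Printing Implicit Defensive.
Import Order.TTheory GRing.Theory Num.Theory.
Import numFieldNormedType.Exports.
Local Open Scope classical_set_scope.
Local Open Scope ring_scope.

Section Graph.
Variables (R : realType) (V : finType) (w : V -> V -> R) (r : R).

Definition edge_rel : rel V := fun i j => 0 < w i j.
Definition is_weighted_graph : Prop :=
  [/\ forall i j, w i j = w j i,
      forall i j, 0 <= w i j,
      forall i, w i i = 0 &
      forall i j, connect edge_rel i j].

Definition deg (i : V) : R := \sum_(j : V) w i j.

Definition innerV (u v : V -> R) : R := \sum_(i : V) u i * v i * (deg i `^ r).
Definition normV (u : V -> R) : R := Num.sqrt (innerV u u).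

Definition massV (u : V -> R) : R := innerV u (fun _ => 1).
Definition avgV (u : V -> R) : R := massV u / massV (fun _ => 1).

Definition Lap (u : V -> R) : V -> R :=
  fun i => (deg i `^ r)^-1 * \sum_(j : V) w i j * (u i - u j).

Definition expLap (tau : R) (u : V -> R) : V -> R :=
  fun i => limn (series (fun k : nat => (- tau) ^+ k / (k`!)%:R * iter k Lap u i)).

Definition in01 (u : V -> R) : Prop := forall i, 0 <= u i <= 1.

Definition inB (u beta : V -> R) : Prop :=
  forall i, (u i = 0 -> 0 <= beta i) /\ (0 < u i < 1 -> beta i = 0)
            /\ (u i = 1 -> beta i <= 0).

(* one step of the semi-discrete scheme: u' = u^{[tau]}_{m+1}, u = u^{[tau]}_m *)
Definition sd_step (eps tau : R) (u u' : V -> R) : Prop :=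
  in01 u' /\ exists beta, inB u' beta /\
    forall i, u' i - expLap tau u i - (tau / eps) * u' i + (tau / eps) * avgV u'
              = (tau / eps) * beta i - (tau / eps) * avgV beta.

Definition sd_iterates (eps tau : R) (u0 : V -> R) (um : nat -> V -> R) : Prop :=
  um 0%N = u0 /\ forall m, sd_step eps tau (um m) (um m.+1).

(* (u, beta) solves the mass-conserving double-obstacle AC flow on [0, oo).
   H^1_loc: each coordinate is the integral of a locally L^2 function g
   (its weak derivative); the equation holds a.e. with du/dt = g. *)
Definition AC_solution (eps : R) (u beta : R -> V -> R) : Prop :=
  (forall i, {within `[0, +oo[, continuous (fun t => u t i)}) /\
  (forall t, 0 <= t -> in01 (u t)) /\
  exists g : R -> V -> R,
    (forall i T, 0 <= T ->
       (@lebesgue_measure R).-integrable `[0, T] (fun s => (g s i)%:E) /\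
       (@lebesgue_measure R).-integrable `[0, T] (fun s => ((g s i) ^+ 2)%:E)) /\
    (forall i t, 0 <= t ->
       u t i = u 0 i + Rintegral (@lebesgue_measure R) `[0, t] (fun s => g s i)) /\
    {ae @lebesgue_measure R, forall t, 0 <= t ->
       inB (u t) (beta t) /\
       forall i, eps * g t i + eps * Lap (u t) i - u t i + avgV (u t)
                 = beta t i - avgV (beta t)}.

End Graph.

(* Main.v *)
Require Import Defs.
From HB Require Import structures.
From mathcomp Require Import all_boot all_order all_algebra.
From mathcomp Require Import all_classical all_reals all_analysis.
From mathcomp Require Import ring lra measurable_realfun.
Import Order.TTheory GRing.Theory Num.Theory.
Import numFieldNormedType.Exports.
Local Open Scope classical_set_scope.
Local Open Scope ring_scope.


Section Alg.
Variables (R : realType) (V : finType) (w : V -> V -> R) (r : R).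

Definition Dg (i : V) : R := deg w i `^ r.
Definition Ssum : R := \sum_i Dg i.
Definition K0c (eps : R) : R := eps * (\sum_i (Dg i)^-1 * deg w i) + 2.
Definition Gc (eps : R) : R := (K0c eps + K0c eps * Ssum * \sum_i (Dg i)^-1) / eps.

Lemma Dg_ge0 i : 0 <= Dg i. Proof. exact: powR_ge0. Qed.

Lemma deg_ge0 i : (forall i j, 0 <= w i j) -> 0 <= deg w i.
Proof. by move=> w0; apply: sumr_ge0 => j _. Qed.

Lemma Ssum_ge0 : 0 <= Ssum.
Proof. by apply: sumr_ge0 => i _; exact: Dg_ge0. Qed.

Lemma le_sum_single (F : V -> R) k : (forall i, 0 <= F i) -> F k <= \sum_i F i.
Proof.
move=> F0; rewrite (bigD1 k) //= lerDl; apply: sumr_ge0 => i _; exact: F0.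
Qed.

Lemma Lap_bound (u : V -> R) i : (forall i j, 0 <= w i j) -> in01 u ->
  `|Lap w r u i| <= (Dg i)^-1 * deg w i.
Proof.
move=> w0 hu; rewrite /Lap normrM ger0_norm ?invr_ge0 ?Dg_ge0 //.
apply: ler_wpM2l; first by rewrite invr_ge0 Dg_ge0.
apply: le_trans (ler_norm_sum _ _ _) _.
apply: ler_sum => j _; rewrite normrM ger0_norm // -[leRHS]mulr1.
apply: ler_wpM2l => //.
have := hu i; have := hu j => /andP[? ?] /andP[? ?].
rewrite ler_norml; apply/andP; split; lra.
Qed.

Lemma massV1 : massV w r (fun _ => 1) = Ssum.
Proof. by rewrite /massV /innerV; apply: eq_bigr => i _; rewrite !mul1r. Qed.

Lemma avg_bound (u : V -> R) : in01 u -> `|avgV w r u| <= 1.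
Proof.
move=> hu; rewrite /avgV massV1.
have [S0|S0] := eqVneq Ssum 0; first by rewrite S0 invr0 mulr0 normr0.
have Sp : 0 < Ssum by rewrite lt_def S0 Ssum_ge0.
have m0 : 0 <= massV w r u.
  apply: sumr_ge0 => i _; rewrite mulr1; apply: mulr_ge0; last exact: Dg_ge0.
  by have /andP[] := hu i.
have mS : massV w r u <= Ssum.
  apply: ler_sum => i _; rewrite mulr1 -[leRHS]mul1r; apply: ler_wpM2r.
    exact: Dg_ge0.
  by have /andP[] := hu i.
rewrite ger0_norm; last exact: divr_ge0 m0 (ltW Sp).
by rewrite ler_pdivrMr // mul1r.
Qed.

Lemma avg_identity (beta : V -> R) :
  \sum_i Dg i * (beta i - avgV w r beta) = 0.
Proof.
have [S0|S0] := eqVneq Ssum 0.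
  have := S0; rewrite /Ssum => /eqP; rewrite psumr_eq0; last by move=> i _; exact: Dg_ge0.
  move/allP => hD; apply: big1 => i _.
  by have /eqP -> := hD i (mem_index_enum i); rewrite mul0r.
rewrite /avgV massV1.
under eq_bigr do rewrite mulrBr.
rewrite sumrB -mulr_suml.
have -> : \sum_i Dg i * beta i = massV w r beta.
  by apply: eq_bigr => i _; rewrite mulr1 mulrC.
by rewrite -/Ssum mulrC divfK // subrr.
Qed.


Lemma single_vertex k : is_weighted_graph w -> deg w k = 0 -> forall j, j = k.
Proof.
case=> _ w0 _ conn dk j.
have wk x : w k x = 0.
  move: dk; rewrite /deg => /eqP; rewrite psumr_eq0; last by move=> y _; exact: w0.
  by move/allP => /(_ x (mem_index_enum x)) /eqP.
have /connectP [p] := conn k j.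
case: p => [_ -> //|x p] /= /andP[hx _] _.
by move: hx; rewrite /edge_rel wk ltxx.
Qed.

Lemma Gc_ge0 eps : (forall i j, 0 <= w i j) -> 0 < eps -> 0 <= Gc eps.
Proof.
move=> w0 e0; have K0 : 0 <= K0c eps.
  apply: addr_ge0 => //; apply: mulr_ge0; first exact: ltW.
  apply: sumr_ge0 => i _; apply: mulr_ge0; first by rewrite invr_ge0 Dg_ge0.
  exact: deg_ge0.
apply: divr_ge0; last exact: ltW.
apply: addr_ge0 => //; apply: mulr_ge0; first apply: mulr_ge0 => //.
  exact: Ssum_ge0.
by apply: sumr_ge0 => i _; rewrite invr_ge0 Dg_ge0.
Qed.

Lemma alg_bound (eps : R) (u beta g : V -> R) :
  is_weighted_graph w -> 0 < eps -> in01 u -> inB u beta ->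
  (forall i, eps * g i + eps * Lap w r u i - u i + avgV w r u
             = beta i - avgV w r beta) ->
  (forall i, u i = 0 \/ u i = 1 -> g i = 0) ->
  forall k, `|g k| <= Gc eps.
Proof.
move=> hG e0 hu hB heq hbd k.
have w0 : forall i j, 0 <= w i j by case: hG.
set c := avgV w r beta.
pose H i := eps * Lap w r u i - u i + avgV w r u.
have HK i : `|H i| <= K0c eps.
  have hL : `|Lap w r u i| <= \sum_i (Dg i)^-1 * deg w i.
    apply: le_trans (Lap_bound u i w0 hu) _.
    apply: (le_sum_single (fun i => (Dg i)^-1 * deg w i)) => j.
    by apply: mulr_ge0; [rewrite invr_ge0 Dg_ge0|exact: deg_ge0].
  have h1 : `|eps * Lap w r u i| <= eps * \sum_i (Dg i)^-1 * deg w i.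
    by rewrite normrM (gtr0_norm e0); apply: ler_wpM2l => //; exact: ltW.
  move: h1 (avg_bound u hu); rewrite /H /K0c !ler_norml => /andP[? ?] /andP[? ?].
  have /andP[? ?] := hu i.
  apply/andP; split; lra.
have Gc0 := Gc_ge0 eps w0 e0.
have bdP i : ~~ (0 < u i < 1) -> u i = 0 \/ u i = 1.
  have /andP[a b] := hu i; rewrite negb_and -!leNgt => /orP[h|h].
    by left; apply/eqP; rewrite eq_le h a.
  by right; apply/eqP; rewrite eq_le h b.
have [intk|/bdP bdk] := boolP (0 < u k < 1); last by rewrite hbd // normr0.
have hbk : beta k = 0 := (hB k).2.1 intk.
have gk : eps * g k = - c - H k.
  by have := heq k; rewrite hbk /H -/c => h; lra.
pose b i := 0 < u i < 1.
have hid : c * (\sum_(i | b i) Dg i) = \sum_(i | ~~ b i) Dg i * H i.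
  have := avg_identity beta; rewrite -/c (bigID b) /=.
  rewrite (eq_bigr (fun i => - (c * Dg i))); last first.
    by move=> i bi; rewrite ((hB i).2.1 bi); ring.
  rewrite (eq_bigr (fun i => Dg i * H i) (P := fun i => ~~ b i)); last first.
    move=> i /bdP bi; congr (_ * _); have := heq i; rewrite hbd // /H -/c => h.
    lra.
  rewrite sumrN -mulr_sumr => h; lra.
have K0p : 0 <= K0c eps.
  apply: addr_ge0 => //; apply: mulr_ge0; first exact: ltW.
  apply: sumr_ge0 => i _; apply: mulr_ge0; first by rewrite invr_ge0 Dg_ge0.
  exact: deg_ge0.
have hrhs : `|\sum_(i | ~~ b i) Dg i * H i| <= K0c eps * Ssum.
  apply: le_trans (ler_norm_sum _ _ _) _.
  apply: (@le_trans _ _ (\sum_(i | ~~ b i) Dg i * K0c eps)).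
    apply: ler_sum => i _; rewrite normrM ger0_norm ?Dg_ge0 //.
    by apply: ler_wpM2l; [exact: Dg_ge0|exact: HK].
  rewrite big_mkcond /= /Ssum mulr_sumr; apply: ler_sum => i _.
  case: ifP => _; first by rewrite mulrC.
  by apply: mulr_ge0 => //; exact: Dg_ge0.
have hc : `|c| <= K0c eps * Ssum * \sum_i (Dg i)^-1.
  have [Dk0|Dkp] : Dg k = 0 \/ 0 < Dg k.
      by have := Dg_ge0 k; rewrite le_eqVlt => /orP[/eqP ->|->]; [left|right].
    have dk : deg w k = 0.
      have := deg_ge0 k w0; rewrite le_eqVlt => /orP[/eqP <- //|/powR_gt0 h].
      by move: Dk0; have := h r; rewrite /Dg => /[swap] ->; rewrite ltxx.
    have -> : c = 0.
      rewrite /c /avgV; have -> : massV w r beta = 0.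
        apply: big1 => j _; rewrite (single_vertex k hG dk j).
        by rewrite -/(Dg k) Dk0 mulr0.
      by rewrite mul0r.
    rewrite normr0; apply: mulr_ge0; first exact: mulr_ge0 _ Ssum_ge0.
    by apply: sumr_ge0 => i _; rewrite invr_ge0 Dg_ge0.
  have hsk : Dg k <= \sum_(i | b i) Dg i.
    rewrite (bigD1 k) //= lerDl; apply: sumr_ge0 => i _; exact: Dg_ge0.
  have h1 : `|c| * Dg k <= K0c eps * Ssum.
    apply: le_trans hrhs; rewrite -hid [in leRHS]normrM.
    apply: ler_wpM2l => //; apply: le_trans hsk _; exact: ler_norm.
  have h2 : `|c| <= K0c eps * Ssum * (Dg k)^-1 by rewrite ler_pdivlMr.
  apply: le_trans h2 _; apply: ler_wpM2l.
    exact: mulr_ge0 _ Ssum_ge0.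
  apply: (le_sum_single (fun i => (Dg i)^-1)) => i; rewrite invr_ge0; exact: Dg_ge0.
rewrite /Gc ler_pdivlMr // mulrC -(gtr0_norm e0) -normrM gk (gtr0_norm e0).
apply: le_trans (ler_normD _ _) _; rewrite normrN normrN addrC.
by apply: lerD => //; exact: HK.
Qed.

End Alg.


Lemma fermat_max (R : realType) (f : R -> R) (a b c : R) :
  derivable f c 1 -> c \in `]a, b[%R ->
  (forall t, t \in `]a, b[%R -> f t <= f c) -> derive1 f c = 0.
Proof.
move=> dfc cab cmax; rewrite derive1E.
suff : is_derive c 1 f 0 by move=> h; rewrite derive_val.
apply: DeriveDef; first exact: dfc.
apply/eqP; rewrite eq_le; apply/andP; split.
  rewrite ['D_1 f c]cvg_at_rightE; last exact: dfc.
  apply: limr_le.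
    rewrite -(cvg_at_rightE (fun h : R => h^-1 *: ((f \o shift c) _ - f c))) //.
    apply: cvg_trans dfc; apply: cvg_app.
    move=> A [e egt0 Ae]; exists e => // x xe xgt0; apply: Ae => //.
    exact/lt0r_neq0.
  near=> h; apply: mulr_ge0_le0.
    by rewrite invr_ge0; apply: ltW; near: h; exists 1 => /=.
  rewrite subr_le0 [_%:A]mulr1; apply: cmax; near: h.
  exists (b - c); first by rewrite /= subr_gt0 (itvP cab).
  move=> h; rewrite /= distrC subr0 /= in_itv /= -ltrBrDr.
  move=> /(le_lt_trans (ler_norm _)) -> /ltr_pDl -> //.
  by rewrite (itvP cab).
rewrite ['D_1 f c]cvg_at_leftE; last exact: dfc.
apply: limr_ge.
  rewrite -(cvg_at_leftE (fun h => h^-1 *: ((f \o shift c) _ - f c))) //.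
  apply: cvg_trans dfc; apply: cvg_app.
  move=> A [e egt0 Ae]; exists e => // x xe xgt0; apply: Ae => //.
  exact/ltr0_neq0.
near=> h; apply: mulr_le0.
  by rewrite invr_le0; apply: ltW; near: h; exists 1 => /=.
rewrite subr_le0 [_%:A]mulr1; apply: cmax; near: h.
exists (c - a); first by rewrite /= subr_gt0 (itvP cab).
move=> h; rewrite /= distrC subr0.
move=> /ltr_normlP []; rewrite ltrBrDl ltrBlDl in_itv /= => -> _.
by move=> /ltr_nDl -> //; rewrite (itvP cab).
Unshelve. all: by end_near. Qed.

Lemma fermat_min (R : realType) (f : R -> R) (a b c : R) :
  derivable f c 1 -> c \in `]a, b[%R ->
  (forall t, t \in `]a, b[%R -> f c <= f t) -> derive1 f c = 0.
Proof.
move=> dfc cab cmin.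
have h : derive1 (- f) c = 0.
  apply: (@fermat_max _ _ a b) => //; first exact: derivableN.
  by move=> t tab; rewrite !fctE lerN2; apply: cmin.
by move: h; rewrite derive1E deriveN // -derive1E => /eqP; rewrite oppr_eq0 => /eqP.
Qed.

Section FTCpart.
Variable R : realType.
Notation mu := (@lebesgue_measure R).

Lemma ftc_part (g : R -> R) :
  (forall T, 0 <= T -> mu.-integrable `[0, T] (fun s => (g s)%:E)) ->
  {ae mu, forall t, 0 < t -> exists F : R -> R, exists T : R,
     [/\ t < T, (forall y, 0 <= y <= T -> F y = Rintegral mu `[0, y]%classic g),
     derivable F t 1 & derive1 F t = g t]}.
Proof.
move=> hint.
pose f (n : nat) := g \_ `[0, n%:R].
have fint n : mu.-integrable [set: R] (EFin \o f n).
  rewrite /f -restrict_EFin; apply/(integrable_mkcond _ _).1 => //.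
  exact: hint.
have hn (n : nat) : {ae mu, forall x, (((0:R)%:E < x%:E)%E) ->
    derivable (fun x : R => Rintegral mu `[0, x]%classic (f n)) x 1 /\
    derive1 (fun x : R => Rintegral mu `[0, x]%classic (f n)) x = f n x}.
  have h1 : forall y : R, mu.-integrable `[0, y] (EFin \o f n).
    by move=> y; apply: integrableS (fint n) => //.
  have := (@FTC1 R (f n) (BLeft 0) h1 (open_integrable_locally openT (fint n))).
  exact.
have := ae_foralln hn.
apply: filterS.
move=> t H tpos.
have := H (Num.truncn t).+1; set n := (Num.truncn t).+1 => /(_ _)[].
  by rewrite lte_fin.
move=> dF dFe.
exists (fun x : R => Rintegral mu `[0, x]%classic (f n)), n%:R.
split => //.
- exact: Num.Theory.truncnS_gt.
- move=> y /andP[y0 yn]; apply: eq_Rintegral => s.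
  rewrite inE /= in_itv /= => /andP[s0 sy].
  by rewrite mem_set //= in_itv /= s0 (le_trans sy yn).
- rewrite dFe /f patchE mem_set //= in_itv /= ltW //=.
  exact/ltW/Num.Theory.truncnS_gt.
Qed.


Lemma int_lip (g : R -> R) (G : R) : 0 <= G ->
  (forall T, 0 <= T -> mu.-integrable `[0, T] (fun s => (g s)%:E)) ->
  {ae mu, forall t, 0 <= t -> `|g t| <= G} ->
  forall s t, 0 <= s -> s <= t ->
  `|Rintegral mu `[0, t]%classic g - Rintegral mu `[0, s]%classic g| <= G * (t - s).
Proof.
move=> G0 hint hae s t s0 st.
have t0 : 0 <= t := le_trans s0 st.
rewrite (@Rintegral_itvB R g (BLeft 0) (BRight t) s (hint t t0)); last 2 first.
- by rewrite bnd_simp.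
- by rewrite bnd_simp.
have intst : mu.-integrable `]s, t] (EFin \o g).
  apply: integrableS (hint t t0) => //; apply: subset_itvr; rewrite bnd_simp //.
apply: le_trans (le_normr_Rintegral _ intst) _; first exact: measurable_itv.
have mg : measurable_fun `]s, t] g.
  by case/integrableP: intst => /measurable_EFinP.
have mf1 : measurable_fun `]s, t] (fun x => (`|g x|)%:E).
  by apply/measurable_EFinP; apply: measurableT_comp.
have hle : (\int[mu]_(x in `]s, t]) (`|g x|)%:E <= (G * (t - s))%:E)%E.
  apply: (@le_trans _ _ (\int[mu]_(x in `]s, t]) (cst G%:E) x)%E).
    have f10 : forall x, `]s, t]%classic x -> (0 <= (`|g x|)%:E)%E.
      by move=> x _; rewrite lee_fin.
    have f20 : forall x, `]s, t]%classic x -> (0 <= cst G%:E x)%E.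
      by move=> x _; rewrite lee_fin.
    have aeH : {ae mu, forall x, `]s, t]%classic x -> ((`|g x|)%:E <= cst G%:E x)%E}.
      apply: (filterS _ hae).
        exact: (@ae_filter_ringOfSetsType _ _ _ mu).
      move=> x hx /=; rewrite in_itv /= => /andP[sx _].
      by  rewrite lee_fin; apply: hx; apply: le_trans s0 (ltW sx).
    exact: (@ae_ge0_le_integral _ _ _ mu _ (measurable_itv _) _ _ f10 mf1 f20
              (measurable_cst _) aeH).
  rewrite integral_cst // [X in (_ * X)%E]lebesgue_measure_itv /=.
  case: ifPn => [_|]; first by rewrite -EFinD -EFinM.
  rewrite lte_fin -leNgt => ts.
  have -> : t = s by apply/eqP; rewrite eq_le ts st.
  by rewrite subrr mulr0 mule0.
rewrite /Rintegral -lee_fin fineK //.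
rewrite ge0_fin_numE; last by apply: integral_ge0 => x _; rewrite lee_fin.
exact: le_lt_trans hle (ltry _).
Qed.

End FTCpart.


Theorem theorem47 (R : realType) (V : finType) (w : V -> V -> R) (r : R)
  (eps : R) (u0 : V -> R) (tau : nat -> R) (useq : nat -> nat -> V -> R)
  (uhat : R -> V -> R) :
  is_weighted_graph w -> 0 <= r <= 1 ->
  0 < eps ->
  in01 u0 -> u0 <> (fun _ => 0) -> u0 <> (fun _ => 1) ->
  (forall n, 0 < tau n < eps) ->
  (forall n, tau n.+1 <= tau n) ->
  tau @ \oo --> 0 ->
  (forall n, sd_iterates w r eps (tau n) u0 (useq n)) ->
  (forall t i, 0 <= t ->
     (fun n => useq n `|Num.ceil (t / tau n)|%N i) @ \oo --> uhat t i) ->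
  (exists gamma, AC_solution w r eps uhat gamma) ->
  uhat 0 = u0 ->
  exists L : R, forall s t, 0 <= s -> 0 <= t ->
    normV w r (uhat t - uhat s) <= L * `|t - s|.
Proof.
move=> hG hr e0 hu0 hn0 hn1 htau htaud htau0 hsd hconv [gamma hAC] huhat0.
case: hAC => _ [hin [g [hint [hrep hae]]]].
set mu := @lebesgue_measure R.
have aeF : Filter (nbhs (almost_everywhere mu)) := @ae_filter_ringOfSetsType _ _ _ mu.
set G := @Gc R V w r eps.
have w0 : forall i j, 0 <= w i j by case: hG.
have G0 : 0 <= G := @Gc_ge0 R V w r eps w0 e0.
have hF i := @ftc_part R _ (fun T hT => (hint i T hT).1).
have hFall := filter_forall aeF hF.
have hz : {ae mu, forall t : R, t != 0}.
  exists [set 0]; split => //; first exact: lebesgue_measure_set1.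
  by move=> x /= /negP; rewrite negbK => /eqP ->.
have hbnd : {ae mu, forall t, 0 <= t -> forall i, `|g t i| <= G}.
  apply: (filterS _ (filterI hFall (filterI hae hz))).
  move=> t [hFt [haet hzt]] t0.
  have tpos : 0 < t by rewrite lt_def hzt t0.
  have [hB heq] := haet t0.
  move=> i; apply: (@alg_bound R V w r eps _ _ _ hG e0 (hin t t0) hB heq) => j hj.
  have [F [T [tT hFT dF dFe]]] := hFt j tpos.
  have Fu y : 0 <= y <= T -> F y = uhat y j - uhat 0 j.
    by move=> /andP[y0 yT]; rewrite hFT ?y0 ?yT // (hrep j y y0) addrC addKr.
  have tin : t \in `]0, T[%R by rewrite in_itv /= tpos tT.
  rewrite -dFe; case: hj => hj.
  - apply: (@fermat_min R _ 0 T t dF tin) => y; rewrite in_itv /= => /andP[y0 yT].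
    rewrite !Fu ?t0 ?(ltW tT) ?(ltW y0) ?(ltW yT) // hj.
    by have /andP[? ?] := hin y (ltW y0) j; lra.
  - apply: (@fermat_max R _ 0 T t dF tin) => y; rewrite in_itv /= => /andP[y0 yT].
    rewrite !Fu ?t0 ?(ltW tT) ?(ltW y0) ?(ltW yT) // hj.
    by have /andP[? ?] := hin y (ltW y0) j; lra.
have hlip i s t : 0 <= s -> s <= t -> `|uhat t i - uhat s i| <= G * (t - s).
  move=> s0 st; have t0 := le_trans s0 st.
  rewrite (hrep i t t0) (hrep i s s0).
  have -> : forall a b c : R, a + b - (a + c) = b - c by move=> a b c; ring.
  have hbi : {ae mu, forall t, 0 <= t -> `|g t i| <= G}.
    apply: (filterS _ hbnd).
    by move=> x hx x0; apply: hx.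
  exact: (@int_lip R (fun s => g s i) G G0 (fun T hT => (hint i T hT).1) hbi s t s0 st).
exists (G * Num.sqrt (@Ssum R V w r)) => s t s0 t0.
have hc i : `|uhat t i - uhat s i| <= G * `|t - s|.
  have [st|ts] := leP s t.
    by rewrite [`|t - s|]ger0_norm ?subr_ge0 //; exact: (hlip i s t s0 st).
  rewrite distrC (distrC t) [`|s - t|]ger0_norm ?subr_ge0 ?(ltW ts) //.
  exact: (hlip i t s t0 (ltW ts)).
have c0 : 0 <= G * `|t - s| by apply: mulr_ge0.
rewrite mulrAC -[G * `|t - s|]ger0_norm // -sqrtr_sqr -sqrtrM ?sqr_ge0 //.
rewrite /normV ler_sqrt; last first.
  apply: mulr_ge0; first exact: sqr_ge0.
  by apply: sumr_ge0 => i _; exact: powR_ge0.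
rewrite /innerV /Ssum mulr_sumr; apply: ler_sum => i _.
rewrite /Dg; apply: ler_wpM2r; first exact: powR_ge0.
have -> : (uhat t - uhat s) i = uhat t i - uhat s i by [].
apply: le_trans (ler_norm _) _; rewrite normrM expr2.
by apply: ler_pM => //; rewrite ger0_norm //.
Qed.
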